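(* For all $\varepsilon,\delta>0$ and all $k\in\mathbb N$ there exists $N=N(\delta,\varepsilon,k)$ such that: if $r>N$ and $A\subseteq\Lambda_k^r$ has $|A|\ge\delta|\Lambda_k^r|$, then for every $x\in\Lambda_k^r$ there are $a_1,a_2\in A$ with $a_1^{-1}a_2\in U_{r\varepsilon}(x)$.
   Context: $\Lambda_k=\{\lambda\in\mathbb C:\lambda^k=1\}$ is the multiplicative group of $k$-th roots of unity, and $\Lambda_k^r$ is its $r$-th Cartesian power with coordinatewise multiplication. Let $d_0$ be one half of Euclidean distance on $\Lambda_k$, and for $x,y\in\Lambda_k^r$ let $d(x,y)=\sum_{j=1}^r d_0(x_j,y_j)$. For $t\ge0$, $U_t(x)=\{y\in\Lambda_k^r:d(x,y)\le t\}$. *)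

(* Defs.v *)
From mathcomp Require Import all_boot all_order all_algebra.
From mathcomp Require Import all_classical all_reals all_analysis.
Set Implicit Arguments. Unset Strict Implicit. Unset Printing Implicit Defensive.
Import Order.TTheory GRing.Theory Num.Theory.
Local Open Scope ring_scope.

(* Model: Lambda_k = {exp(2 pi i j / k) : j < k}, the root with index j is
   encoded by j : 'I_k; its position in the plane is (cos, sin) of ang k j. *)
Section Defs.
Variable R : realType.

Definition ang (k j : nat) : R := 2 * pi * j%:R / k%:R.

Definition d0 (k i j : nat) : R :=
  Num.sqrt ((cos (ang k i) - cos (ang k j)) ^+ 2
          + (sin (ang k i) - sin (ang k j)) ^+ 2) / 2.

Definition Lam (k r : nat) := {ffun 'I_r -> 'I_k}.

Definition dist (k r : nat) (x y : 'I_r -> nat) : R :=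
  \sum_(j < r) d0 k (x j) (y j).

(* index vector of a1^{-1} a2 (coordinatewise): exp(2pi i (b - a)/k) *)
Definition quotL (k r : nat) (a1 a2 : Lam k r) : 'I_r -> nat :=
  fun j => (((a2 j : nat) + (k - (a1 j : nat))) %% k)%N.

Definition inU (k r : nat) (t : R) (x y : 'I_r -> nat) : Prop :=
  dist k x y <= t.
End Defs.

(* Main.v *)
Require Import Defs.
From mathcomp Require Import all_boot all_order all_algebra.
From mathcomp Require Import all_classical all_reals all_analysis.
From mathcomp Require Import ring lra.
Import Order.TTheory GRing.Theory Num.Theory.
Local Open Scope ring_scope.
Set Implicit Arguments. Unset Strict Implicit. Unset Printing Implicit Defensive.

Section ES.
Variable R : realType.
Variable k : nat.
Notation G r := {ffun 'I_r -> 'I_k}.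

Definition ham r (x y : G r) : nat := (\sum_(i < r) (x i != y i))%N.

Definition ext r (x : G r) (a : 'I_k) : G r.+1 :=
  [ffun i => if unlift ord_max i is Some j then x j else a].
Definition res r (x : G r.+1) : G r := [ffun i => x (widen_ord (leqnSn r) i)].

Lemma widen_lift r (i : 'I_r) : widen_ord (leqnSn r) i = lift ord_max i.
Proof. by apply/eqP; rewrite -val_eqE /= /bump leqNgt ltn_ord. Qed.

Lemma ext_widen r (x : G r) a i : ext x a (widen_ord (leqnSn r) i) = x i.
Proof. by rewrite ffunE widen_lift liftK. Qed.

Lemma ext_max r (x : G r) a : ext x a ord_max = a.
Proof. by rewrite ffunE unlift_none. Qed.

Lemma res_ext r (x : G r) a : res (ext x a) = x.
Proof. by apply/ffunP => i; rewrite ffunE ext_widen. Qed.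

Lemma ext_res r (x : G r.+1) : ext (res x) (x ord_max) = x.
Proof.
apply/ffunP => i; rewrite ffunE; case: unliftP => [j ->|->] //.
by rewrite ffunE widen_lift.
Qed.

Lemma sum_ext r (F : G r.+1 -> R) :
  \sum_(x : G r.+1) F x = \sum_(x : G r) \sum_(a : 'I_k) F (ext x a).
Proof.
rewrite pair_big /=.
rewrite (reindex (fun p : G r * 'I_k => ext p.1 p.2)) //=.
exists (fun x => (res x, x ord_max)) => [[x a] _|x _] /=.
  by rewrite res_ext ext_max.
by rewrite ext_res.
Qed.

Lemma ham_ext r (x y : G r) a b : ham (ext x a) (ext y b) = (ham x y + (a != b))%N.
Proof.
rewrite /ham big_ord_recr /= !ext_max; congr (_ + _)%N.
by apply: eq_bigr => i _; rewrite !ext_widen.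
Qed.

Lemma ham_xx r (x : G r) : ham x x = 0%N.
Proof. by rewrite /ham big1 // => i _; rewrite eqxx. Qed.

Lemma ham_sym r (x y : G r) : ham x y = ham y x.
Proof. by apply: eq_bigr => i _; rewrite eq_sym. Qed.

Lemma ham_tri r (x y z : G r) : (ham x z <= ham x y + ham y z)%N.
Proof.
rewrite /ham -big_split /=; apply: leq_sum => i _.
have [->|nexy] := eqVneq (x i) (y i).
  by rewrite /= add0n.
by rewrite /= (leq_trans (leq_b1 _)) // leq_addr.
Qed.

Lemma pair_identity (X : finType) (u v : X -> R) :
  \sum_(x : X) \sum_(y : X) (u x - v y) ^+ 2 =
  #|X|%:R * \sum_x u x ^+ 2 + #|X|%:R * \sum_y v y ^+ 2
  - 2 * (\sum_x u x) * (\sum_y v y).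
Proof.
have H x : \sum_(y : X) (u x - v y) ^+ 2 =
   #|X|%:R * u x ^+ 2 + \sum_y v y ^+ 2 - 2 * u x * \sum_y v y.
  rewrite (eq_bigr (fun y => u x ^+ 2 + (v y ^+ 2 - 2 * u x * v y))); last first.
    by move=> y _; ring.
  rewrite big_split /= sumrB sumr_const -mulr_natl -mulr_sumr; ring.
rewrite (eq_bigr _ (fun x _ => H x)) sumrB big_split /= sumr_const.
rewrite -mulr_sumr -mulr_suml -mulr_sumr -mulr_natr; ring.
Qed.

Lemma ES r (f : G r -> R) :
  (forall x y, `|f x - f y| <= (ham x y)%:R) ->
  \sum_(x : G r) \sum_(y : G r) (f x - f y) ^+ 2 <= 2 * r%:R * ((k ^ r)%N%:R) ^+ 2.
Proof.
elim: r f => [|r IH] f Hf.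
  rewrite big1 ?mul0r ?mulr0 // => x _; rewrite big1 // => y _.
  have := Hf x y; rewrite /ham big_ord0 normr_le0 => /eqP ->.
  by rewrite expr0n.
set N : R := (k ^ r)%N%:R.
have cardG : #|{: G r}|%:R = N :> R by rewrite card_ffun !card_ord.
pose g (a : 'I_k) (x : G r) := f (ext x a).
have Hab a b : \sum_(x : G r) \sum_(y : G r) (g a x - g b y) ^+ 2
               <= (2 * r%:R + 1) * N ^+ 2.
  rewrite pair_identity cardG.
  have M : `|\sum_x g a x - \sum_x g b x| <= N.
    rewrite -sumrB; apply: (le_trans (ler_norm_sum _ _ _)).
    rewrite -cardG -sum1_card natr_sum; apply: ler_sum => x _.
    by apply: (le_trans (Hf _ _)); rewrite ham_ext ham_xx add0n ler_nat leq_b1.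
  move: M; rewrite ler_norml => /andP [M1 M2].
  have IHa' : N * \sum_x g a x ^+ 2 + N * \sum_x g a x ^+ 2 -
         2 * (\sum_x g a x) * (\sum_x g a x) <= 2 * r%:R * N ^+ 2.
    have L : forall x y, `|g a x - g a y| <= (ham x y)%:R.
      by move=> x y; apply: (le_trans (Hf _ _)); rewrite ham_ext eqxx addn0.
    by have := IH (g a) L; rewrite pair_identity cardG.
  have IHb' : N * \sum_x g b x ^+ 2 + N * \sum_x g b x ^+ 2 -
         2 * (\sum_x g b x) * (\sum_x g b x) <= 2 * r%:R * N ^+ 2.
    have L : forall x y, `|g b x - g b y| <= (ham x y)%:R.
      by move=> x y; apply: (le_trans (Hf _ _)); rewrite ham_ext eqxx addn0.
    by have := IH (g b) L; rewrite pair_identity cardG.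
  move: M1 M2 IHa' IHb'.
  set Qa := \sum_x g a x ^+ 2; set Qb := \sum_x g b x ^+ 2.
  set Ma := \sum_x g a x; set Mb := \sum_x g b x.
  move=> M1 M2 IHa' IHb'.
  have sq : (Ma - Mb) ^+ 2 <= N ^+ 2.
    have : 0 <= (N - (Ma - Mb)) * (N + (Ma - Mb)).
      by apply: mulr_ge0; lra.
    have -> : (N - (Ma - Mb)) * (N + (Ma - Mb)) = N ^+ 2 - (Ma - Mb) ^+ 2 by ring.
    by rewrite subr_ge0.
  have -> : N * Qa + N * Qb - 2 * Ma * Mb =
     (N * Qa + N * Qa - 2 * Ma * Ma) / 2 + (N * Qb + N * Qb - 2 * Mb * Mb) / 2
     + (Ma - Mb) ^+ 2 by field.
  move: IHa' IHb' sq.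
  set X := N * Qa + N * Qa - 2 * Ma * Ma; set Y := N * Qb + N * Qb - 2 * Mb * Mb.
  set Z := (Ma - Mb) ^+ 2; set W := N ^+ 2.
  have -> : 2 * r%:R * W = r%:R * W + r%:R * W by ring.
  set T := r%:R * W.
  have -> : (2 * r%:R + 1) * N ^+ 2 = T + T + W by rewrite /T /W; ring.
  clearbody X Y Z W T.
  move=> *. lra.
rewrite sum_ext.
under eq_bigr => x _ do under eq_bigr => a _ do rewrite sum_ext.
have E : forall x a, \sum_(y : G r) \sum_(b < k) (f (ext x a) - f (ext y b)) ^+ 2
   = \sum_(b < k) \sum_(y : G r) (f (ext x a) - f (ext y b)) ^+ 2.
  by move=> x a; apply: exchange_big.
under eq_bigr => x _ do under eq_bigr => a _ do rewrite E.
rewrite exchange_big.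
under eq_bigr => a _ do rewrite exchange_big.
apply: (le_trans (y := \sum_(a : 'I_k) \sum_(b : 'I_k) (2 * r%:R + 1) * N ^+ 2)).
  by apply: ler_sum => a _; apply: ler_sum => b _; apply: Hab.
rewrite !sumr_const card_ord -mulrnA.
have -> : forall c : R, c *+ (k * k) = c * (k%:R * k%:R) by move=> c; rewrite -natrM mulr_natr.
rewrite expnSr (natrM _ (k ^ r)) -/N.
have -> : 2 * r.+1%:R * (N * k%:R) ^+ 2 =
   (2 * r%:R + 1) * N ^+ 2 * (k%:R * k%:R) + (N * k%:R) ^+ 2.
  by rewrite -natr1; ring.
by rewrite lerDl sqr_ge0.
Qed.
End ES.


Lemma d0_same (R : realType) k i : d0 R k i i = 0.
Proof. by rewrite /d0 !subrr expr0n /= addr0 sqrtr0 mul0r. Qed.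

Lemma d0_le1 (R : realType) k i j : d0 R k i j <= 1.
Proof.
rewrite /d0 ler_pdivrMr // mul1r.
set c1 := cos _; set c2 := cos _; set s1 := sin _; set s2 := sin _.
have E : (c1 - c2) ^+ 2 + (s1 - s2) ^+ 2 =
   2 * (c1 ^+ 2 + s1 ^+ 2) + 2 * (c2 ^+ 2 + s2 ^+ 2) - ((c1 + c2) ^+ 2 + (s1 + s2) ^+ 2)
  by ring.
rewrite E /c1 /s1 /c2 /s2 !cos2Dsin2.
have Q : 0 <= (cos (ang R k i) + cos (ang R k j)) ^+ 2 + (sin (ang R k i) + sin (ang R k j)) ^+ 2.
  by rewrite addr_ge0 // sqr_ge0.
apply: (le_trans (ler_wsqrtr (_ : _ <= 2 ^+ 2))).
  move: Q; set Z := _ + _; move=> Q; lra.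
by rewrite sqrtr_sqr ger0_norm.
Qed.

Unset Implicit Arguments.

Theorem lemma6p3 (R : realType) (eps delta : R) (k : nat) :
  0 < eps -> 0 < delta -> (0 < k)%N ->
  exists N : nat, forall (r : nat) (A : {set Lam k r}),
    (N < r)%N ->
    delta * #|[set: Lam k r]|%:R <= #|A|%:R ->
    forall x : Lam k r, exists a1 a2 : Lam k r,
      a1 \in A /\ a2 \in A /\
      @inU R k r (r%:R * eps) (fun j => (x j : nat)) (quotL a1 a2).
Proof.
move=> eps0 delta0 k0.
set D := delta ^+ 2 * eps ^+ 2.
have D0 : 0 < D by rewrite mulr_gt0 // exprn_gt0.
exists (Num.truncn (2 / D)) => r A Hr HA x.
set N : R := #|[set: Lam k r]|%:R.
have N0 : 0 < N.
  by rewrite /N ltr0n cardsT card_ffun card_ord expn_gt0 k0.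
have [a0 a0A] : exists a0, a0 \in A.
  apply/set0Pn; rewrite -card_gt0 -(ltr0n R).
  by apply: lt_le_trans HA; rewrite mulr_gt0.
pose sigma (b : Lam k r) : Lam k r :=
  [ffun j => Ordinal (ltn_pmod ((b j : nat) + x j) k0)].
have sigma_inj : injective sigma.
  move=> b b' /ffunP E; apply/ffunP => j; have := E j; rewrite !ffunE.
  move=> /(congr1 val) /= /eqP; rewrite eqn_modDr !modn_small // => /eqP.
  exact: val_inj.
set B := sigma @^-1: A.
have cardB : #|B| = #|A| by rewrite card_preimset.
pose am (b : Lam k r) := [arg min_(a < a0 in A) ham b a].
pose fA (b : Lam k r) := ham b (am b).
have amA b : am b \in A by rewrite /am; case: arg_minnP.
have amM b a : a \in A -> (fA b <= ham b a)%N.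
  by rewrite /fA /am; case: arg_minnP => // a1 _ H /H.
have fA0 a : a \in A -> fA a = 0%N.
  by move=> aA; apply/eqP; rewrite -leqn0 -(ham_xx a) amM.
have fLip b c : (fA b <= ham b c + fA c)%N.
  exact: leq_trans (amM b _ (amA c)) (ham_tri _ c _).
case: (pickP [pred b in B | (fA b)%:R <= r%:R * eps :> R]) => [b /andP[bB Hb] | Hnone].
  exists (am b), (sigma b); split; first exact: amA.
  split; first by move: bB; rewrite inE.
  rewrite /inU /dist.
  apply: (le_trans _ Hb); rewrite /fA /ham natr_sum; apply: ler_sum => j _.
  have [E|NE] := eqVneq (b j) (am b j).
    have -> : quotL (am b) (sigma b) j = x j.
      rewrite /quotL ffunE /= -E modnDml -addnA (addnC (x j)) addnA subnKC.
        by rewrite addnC modnDr modn_small.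
      exact: ltnW.
    by rewrite d0_same.
  exact: d0_le1.
exfalso.
set f := fun b : Lam k r => (fA b)%:R : R.
have Lf : forall b c, `|f b - f c| <= (ham b c)%:R.
  move=> b c; rewrite ler_norml /f.
  have H1 := fLip b c; have H2 := fLip c b; rewrite ham_sym in H2.
  rewrite -!(ler_nat R) !natrD in H1 H2; apply/andP; split; lra.
have ESf := ES Lf.
have cardN : (k ^ r)%N%:R = N by rewrite /N cardsT card_ffun !card_ord.
rewrite cardN in ESf.
have low : #|A|%:R * #|B|%:R * (r%:R * eps) ^+ 2 <= \sum_b \sum_c (f b - f c) ^+ 2.
  rewrite (bigID (mem A)) /= -[X in X <= _]addr0 lerD //; last first.
    by apply: sumr_ge0 => b _; apply: sumr_ge0 => c _; apply: sqr_ge0.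
  apply: (le_trans (y := \sum_(b in A) #|B|%:R * (r%:R * eps) ^+ 2)).
    by rewrite sumr_const -mulrA mulr_natl.
  apply: ler_sum => b bA.
  rewrite (bigID (mem B)) /= -[X in X <= _]addr0 lerD //; last first.
    by apply: sumr_ge0 => c _; apply: sqr_ge0.
  apply: (le_trans (y := \sum_(c in B) (r%:R * eps) ^+ 2)).
    by rewrite sumr_const mulr_natl.
  apply: ler_sum => c cB.
  have := Hnone c; rewrite /= cB /= => /negbT; rewrite -ltNge => Hc.
  rewrite /f fA0 // mulr0n sub0r sqrrN.
  have e0 : 0 <= r%:R * eps by rewrite mulr_ge0 // ltW.
  move: Hc e0; set u := (fA c)%:R; set v := r%:R * eps => Hc e0.
  by rewrite !expr2 ler_pM // ltW.
have big : 2 < r%:R * D.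
  rewrite -ltr_pdivrMr //; apply: (lt_le_trans (truncnS_gt _)).
  by rewrite ler_nat.
have HB : delta * N <= #|B|%:R by rewrite cardB.
have key : (delta * N) * (delta * N) * (r%:R * eps) ^+ 2 <= 2 * r%:R * N ^+ 2.
  apply: le_trans ESf; apply: le_trans low.
  rewrite ler_pM2r; last by rewrite exprn_gt0 // mulr_gt0 // ltr0n (leq_ltn_trans _ Hr).
  apply: ler_pM => //; by rewrite mulr_ge0 // ltW.
have r0 : 0 < r%:R :> R by rewrite ltr0n (leq_ltn_trans _ Hr).
have : (r%:R * N ^+ 2) * (r%:R * D) <= (r%:R * N ^+ 2) * 2.
  by move: key; rewrite /D; congr (_ <= _); ring.
rewrite ler_pM2l; last by rewrite mulr_gt0 // exprn_gt0.
by rewrite leNgt big.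
Qed.
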